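(* (a) For all $A,B\in\mathcal Q^{\vartriangle}$, $$A-^{\vartriangle}B=\bigcap_{z^*\in C^-\setminus\{0\}}\{z\in Z:\ \sigma^{\vartriangle}_A(z^* )-^{\vartriangle}\sigma^{\vartriangle}_B(z^* )\leq -z^*(z)\}.$$ If moreover $A=\{z\in Z: \sigma^{\vartriangle}_A(z^* )\leq -z^*(z)\}$ for some $z^*\in C^-\setminus\{0\}$, then $A-^{\vartriangle}B=\{z\in Z: \sigma^{\vartriangle}_A(z^* )-^{\vartriangle}\sigma^{\vartriangle}_B(z^* )\leq -z^*(z)\}$. (b) For all $A,B\in\mathcal Q^{\triangledown}$, $$A-^{\triangledown}B=\bigcap_{z^*\in C^-\setminus\{0\}}\{z\in Z:\ -z^*(z)\leq\sigma^{\triangledown}_A(z^* )-^{\triangledown}\sigma^{\triangledown}_B(z^* )\}.$$ If moreover $A=\{z\in Z: -z^*(z)\leq\sigma^{\triangledown}_A(z^* )\}$ for some $z^*\in C^-\setminus\{0\}$, then $A-^{\triangledown}B=\{z\in Z: -z^*(z)\leq\sigma^{\triangledown}_A(z^* )-^{\triangledown}\sigma^{\triangledown}_B(z^* )\}$.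
   Context: $Z$ is a separated locally convex space with dual $Z^*$; $C\subseteq Z$ is a convex cone with $0\in C$, and $C^-=\{z^*\in Z^*: z^*(z)\leq0\ \forall z\in C\}$, assumed to satisfy $C^-\neq\{0\}$. $\mathcal Q^{\vartriangle}=\{A\subseteq Z: A=\operatorname{cl}\operatorname{co}(A+C)\}$, $\mathcal Q^{\triangledown}=\{A\subseteq Z: A=\operatorname{cl}\operatorname{co}(A-C)\}$ (both contain $\emptyset$). Set differences: for $A,B\in\mathcal Q^{\vartriangle}$, $A-^{\vartriangle}B=\{z\in Z: B+\{z\}\subseteq A\}$; for $A,B\in\mathcal Q^{\triangledown}$, $A-^{\triangledown}B=\{z\in Z: B+\{z\}\subseteq A\}$. Support-type functions: $\sigma^{\vartriangle}_D(z^* )=\inf_{z\in D}(-z^*(z))$, $\sigma^{\triangledown}_D(z^* )=\sup_{z\in D}(-z^*(z))$ (with $\inf\emptyset=+\infty$, $\sup\emptyset=-\infty$). On $\overline{\mathbb R}=\mathbb R\cup\{\pm\infty\}$: inf-addition $r+^{\vartriangle}s=\inf\{a+b: a,b\in\mathbb R, r\leq a, s\leq b\}$, sup-addition $r+^{\triangledown}s=\sup\{a+b: a,b\in\mathbb R, a\leq r, b\leq s\}$, inf-difference $r-^{\vartriangle}s=\min\{t: r\leq s+^{\vartriangle}t\}$, sup-difference $r-^{\triangledown}s=\max\{t: s+^{\triangledown}t\leq r\}$. *)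

(* Defs.v *)
From Stdlib Require Import Reals Lra Classical ClassicalEpsilon.
Open Scope R_scope.

Record LCS := {
  car :> Type;
  zzero : car;
  zadd : car -> car -> car;
  zopp : car -> car;
  zscal : R -> car -> car;
  zadd_assoc : forall x y w, zadd x (zadd y w) = zadd (zadd x y) w;
  zadd_comm : forall x y, zadd x y = zadd y x;
  zadd_0 : forall x, zadd x zzero = x;
  zadd_opp : forall x, zadd x (zopp x) = zzero;
  zscal_assoc : forall a b x, zscal a (zscal b x) = zscal (a * b) x;
  zscal_1 : forall x, zscal 1 x = x;
  zscal_distr_l : forall a x y, zscal a (zadd x y) = zadd (zscal a x) (zscal a y);
  zscal_distr_r : forall a b x, zscal (a + b) x = zadd (zscal a x) (zscal b x);
  zopen : (car -> Prop) -> Prop;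
  zopen_full : zopen (fun _ => True);
  zopen_inter : forall U V, zopen U -> zopen V -> zopen (fun x => U x /\ V x);
  zopen_union : forall F : (car -> Prop) -> Prop,
      (forall U, F U -> zopen U) -> zopen (fun x => exists U, F U /\ U x);
  zadd_cont : forall x y U, zopen U -> U (zadd x y) ->
      exists V W, zopen V /\ zopen W /\ V x /\ W y /\
        forall x' y', V x' -> W y' -> U (zadd x' y');
  zscal_cont : forall r x U, zopen U -> U (zscal r x) ->
      exists eps, 0 < eps /\ exists V, zopen V /\ V x /\
        forall s x', Rabs (s - r) < eps -> V x' -> U (zscal s x');
  zloc_convex : forall U, zopen U -> U zzero ->
      exists V, zopen V /\ V zzero /\
        (forall a b t, V a -> V b -> 0 <= t <= 1 ->
           V (zadd (zscal t a) (zscal (1 - t) b))) /\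
        (forall x, V x -> U x);
  zhausdorff : forall x y, x <> y ->
      exists U V, zopen U /\ zopen V /\ U x /\ V y /\ forall w, U w -> V w -> False
}.

Section Sets.
Context {Z : LCS}.

Definition convex_set (A : Z -> Prop) : Prop :=
  forall a b t, A a -> A b -> 0 <= t <= 1 -> A (zadd Z (zscal Z t a) (zscal Z (1 - t) b)).

Definition conv_hull (A : Z -> Prop) : Z -> Prop :=
  fun z => forall D, convex_set D -> (forall a, A a -> D a) -> D z.

Definition closure (A : Z -> Prop) : Z -> Prop :=
  fun z => forall U, zopen Z U -> U z -> exists a, U a /\ A a.

Definition set_add (A B : Z -> Prop) : Z -> Prop :=
  fun z => exists a b, A a /\ B b /\ z = zadd Z a b.
Definition set_sub (A B : Z -> Prop) : Z -> Prop :=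
  fun z => exists a b, A a /\ B b /\ z = zadd Z a (zopp Z b).

Definition convex_cone (C : Z -> Prop) : Prop :=
  convex_set C /\ (forall t z, 0 < t -> C z -> C (zscal Z t z)).

Definition is_linear (f : Z -> R) : Prop :=
  (forall x y, f (zadd Z x y) = f x + f y) /\ (forall a x, f (zscal Z a x) = a * f x).
Definition is_continuous (f : Z -> R) : Prop :=
  forall x eps, 0 < eps -> exists U, zopen Z U /\ U x /\ forall y, U y -> Rabs (f y - f x) < eps.
Definition in_dual (f : Z -> R) : Prop := is_linear f /\ is_continuous f.

Definition Cminus (C : Z -> Prop) (zs : Z -> R) : Prop :=
  in_dual zs /\ forall z, C z -> zs z <= 0.

(* Q^up = {A | A = cl co (A + C)},  Q^down = {A | A = cl co (A - C)} *)
Definition in_Q_inf (C A : Z -> Prop) : Prop :=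
  forall z, A z <-> closure (conv_hull (set_add A C)) z.
Definition in_Q_sup (C A : Z -> Prop) : Prop :=
  forall z, A z <-> closure (conv_hull (set_sub A C)) z.

Definition set_diff (A B : Z -> Prop) : Z -> Prop :=
  fun z => forall b, B b -> A (zadd Z b z).

End Sets.

Inductive Rbar := Fin (r : R) | PInf | MInf.

Definition Rbar_le (x y : Rbar) : Prop :=
  match x, y with
  | MInf, _ => True
  | _, PInf => True
  | Fin a, Fin b => a <= b
  | _, _ => False
  end.

(* infimum / supremum in Rbar of a set of reals (inf ∅ = +∞, sup ∅ = -∞) *)
Definition Rbar_is_glb (P : R -> Prop) (t : Rbar) : Prop :=
  (forall x, P x -> Rbar_le t (Fin x)) /\
  (forall u, (forall x, P x -> Rbar_le u (Fin x)) -> Rbar_le u t).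
Definition Rbar_is_lub (P : R -> Prop) (t : Rbar) : Prop :=
  (forall x, P x -> Rbar_le (Fin x) t) /\
  (forall u, (forall x, P x -> Rbar_le (Fin x) u) -> Rbar_le t u).

Definition Rbar_inf (P : R -> Prop) : Rbar := epsilon (inhabits PInf) (Rbar_is_glb P).
Definition Rbar_sup (P : R -> Prop) : Rbar := epsilon (inhabits MInf) (Rbar_is_lub P).

Definition Rbar_plus_inf (r s : Rbar) : Rbar :=
  Rbar_inf (fun x => exists a b, Rbar_le r (Fin a) /\ Rbar_le s (Fin b) /\ x = a + b).
Definition Rbar_plus_sup (r s : Rbar) : Rbar :=
  Rbar_sup (fun x => exists a b, Rbar_le (Fin a) r /\ Rbar_le (Fin b) s /\ x = a + b).

Definition Rbar_minus_inf (r s : Rbar) : Rbar :=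
  epsilon (inhabits PInf) (fun t => Rbar_le r (Rbar_plus_inf s t) /\
                          forall t', Rbar_le r (Rbar_plus_inf s t') -> Rbar_le t t').
Definition Rbar_minus_sup (r s : Rbar) : Rbar :=
  epsilon (inhabits MInf) (fun t => Rbar_le (Rbar_plus_sup s t) r /\
                          forall t', Rbar_le (Rbar_plus_sup s t') r -> Rbar_le t' t).

Definition sigma_inf {Z : LCS} (D : Z -> Prop) (zs : Z -> R) : Rbar :=
  Rbar_inf (fun x => exists z, D z /\ x = - zs z).
Definition sigma_sup {Z : LCS} (D : Z -> Prop) (zs : Z -> R) : Rbar :=
  Rbar_sup (fun x => exists z, D z /\ x = - zs z).

(* Main.v *)
Require Import Defs.
From Stdlib Require Import Reals Lra Classical ClassicalEpsilon FunctionalExtensionality PropExtensionality.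
Open Scope R_scope.

Lemma Rbar_le_refl x : Rbar_le x x.
Proof. destruct x; simpl; auto; lra. Qed.
Lemma Rbar_le_trans x y z : Rbar_le x y -> Rbar_le y z -> Rbar_le x z.
Proof. destruct x, y, z; simpl; auto; try tauto; lra. Qed.
Lemma Rbar_le_antisym x y : Rbar_le x y -> Rbar_le y x -> x = y.
Proof. destruct x, y; simpl; try tauto; intros; f_equal; lra. Qed.

Lemma glb_unique P t1 t2 : Rbar_is_glb P t1 -> Rbar_is_glb P t2 -> t1 = t2.
Proof. intros [H1 H2] [H3 H4]. apply Rbar_le_antisym; auto. Qed.
Lemma lub_unique P t1 t2 : Rbar_is_lub P t1 -> Rbar_is_lub P t2 -> t1 = t2.
Proof. intros [H1 H2] [H3 H4]. apply Rbar_le_antisym; auto. Qed.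

Lemma lub_ex (P : R -> Prop) : exists t, Rbar_is_lub P t.
Proof.
  destruct (classic (exists x, P x)) as [[x0 Hx0]|Hne].
  - destruct (classic (exists M, forall x, P x -> x <= M)) as [[M HM]|Hnb].
    + destruct (completeness P) as [m [Hm1 Hm2]].
      { exists M. intros x Hx; auto. }
      { exists x0; auto. }
      exists (Fin m). split.
      * intros x Hx. simpl. apply Hm1; auto.
      * intros u Hu. destruct u; simpl.
        -- apply Hm2. intros x Hx. specialize (Hu x Hx). simpl in Hu. auto.
        -- auto.
        -- specialize (Hu x0 Hx0). simpl in Hu. auto.
    + exists PInf. split.
      * intros; simpl; auto.
      * intros u Hu. destruct u; simpl; auto.
        -- apply Hnb. exists r. intros x Hx. specialize (Hu x Hx); simpl in Hu; auto.
        -- specialize (Hu x0 Hx0); simpl in Hu; auto.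
  - exists MInf. split.
    + intros x Hx. exfalso; apply Hne; eauto.
    + intros; simpl; auto.
Qed.

Lemma glb_ex (P : R -> Prop) : exists t, Rbar_is_glb P t.
Proof.
  destruct (classic (exists x, P x)) as [[x0 Hx0]|Hne].
  - destruct (classic (exists M, forall x, P x -> M <= x)) as [[M HM]|Hnb].
    + destruct (completeness (fun y => P (- y))) as [m [Hm1 Hm2]].
      { exists (- M). intros x Hx. specialize (HM _ Hx). lra. }
      { exists (- x0). rewrite Ropp_involutive; auto. }
      exists (Fin (- m)). split.
      * intros x Hx. simpl. assert (- x <= m). { apply Hm1. rewrite Ropp_involutive; auto. } lra.
      * intros u Hu. destruct u; simpl.
        -- assert (m <= - r). { apply Hm2. intros x Hx. specialize (Hu _ Hx). simpl in Hu. lra. } lra.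
        -- specialize (Hu x0 Hx0). simpl in Hu. auto.
        -- auto.
    + exists MInf. split.
      * intros; simpl; auto.
      * intros u Hu. destruct u; simpl; auto.
        -- apply Hnb. exists r. intros x Hx. specialize (Hu x Hx); simpl in Hu; auto.
        -- specialize (Hu x0 Hx0); simpl in Hu; auto.
  - exists PInf. split.
    + intros x Hx. exfalso; apply Hne; eauto.
    + intros u _; destruct u; simpl; auto.
Qed.

Lemma inf_spec P : Rbar_is_glb P (Rbar_inf P).
Proof. unfold Rbar_inf. apply epsilon_spec. apply glb_ex. Qed.
Lemma sup_spec P : Rbar_is_lub P (Rbar_sup P).
Proof. unfold Rbar_sup. apply epsilon_spec. apply lub_ex. Qed.

Lemma inf_lb (P : R -> Prop) x : P x -> Rbar_le (Rbar_inf P) (Fin x).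
Proof. intros; apply (proj1 (inf_spec P)); auto. Qed.
Lemma inf_gr (P : R -> Prop) u : (forall x, P x -> Rbar_le u (Fin x)) -> Rbar_le u (Rbar_inf P).
Proof. intros; apply (proj2 (inf_spec P)); auto. Qed.
Lemma sup_ub (P : R -> Prop) x : P x -> Rbar_le (Fin x) (Rbar_sup P).
Proof. intros; apply (proj1 (sup_spec P)); auto. Qed.
Lemma sup_le (P : R -> Prop) u : (forall x, P x -> Rbar_le (Fin x) u) -> Rbar_le (Rbar_sup P) u.
Proof. intros; apply (proj2 (sup_spec P)); auto. Qed.

Lemma inf_mono (P P' : R -> Prop) : (forall x, P' x -> P x) -> Rbar_le (Rbar_inf P) (Rbar_inf P').
Proof. intros H. apply inf_gr. intros x Hx. apply inf_lb; auto. Qed.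
Lemma sup_mono (P P' : R -> Prop) : (forall x, P x -> P' x) -> Rbar_le (Rbar_sup P) (Rbar_sup P').
Proof. intros H. apply sup_le. intros x Hx. apply sup_ub; auto. Qed.

Lemma glb_empty (P : R -> Prop) : (forall x, ~ P x) -> Rbar_is_glb P PInf.
Proof. intros H; split. intros x Hx; exfalso; eapply H; eauto. intros u _; destruct u; simpl; auto. Qed.
Lemma glb_all (P : R -> Prop) : (forall x, P x) -> Rbar_is_glb P MInf.
Proof. intros H; split. intros; simpl; auto. intros u Hu; destruct u; simpl; auto.
  specialize (Hu (r - 1) (H _)); simpl in Hu; lra. apply (Hu 0 (H _)). Qed.
Lemma glb_min (P : R -> Prop) m : P m -> (forall x, P x -> m <= x) -> Rbar_is_glb P (Fin m).
Proof. intros H1 H2; split. intros x Hx; simpl; auto. intros u Hu; apply Hu; auto. Qed.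
Lemma lub_empty (P : R -> Prop) : (forall x, ~ P x) -> Rbar_is_lub P MInf.
Proof. intros H; split. intros x Hx; exfalso; eapply H; eauto. intros u _; destruct u; simpl; auto. Qed.
Lemma lub_all (P : R -> Prop) : (forall x, P x) -> Rbar_is_lub P PInf.
Proof. intros H; split. intros; simpl; auto. intros u Hu; destruct u; simpl; auto.
  specialize (Hu (r + 1) (H _)); simpl in Hu; lra. apply (Hu 0 (H _)). Qed.
Lemma lub_max (P : R -> Prop) m : P m -> (forall x, P x -> x <= m) -> Rbar_is_lub P (Fin m).
Proof. intros H1 H2; split. intros x Hx; simpl; auto. intros u Hu; apply Hu; auto. Qed.

Definition pinf_e (r s : Rbar) : Rbar :=
  match r, s with
  | PInf, _ => PInf | _, PInf => PInf | MInf, _ => MInf | _, MInf => MInf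
  | Fin a, Fin b => Fin (a + b) end.
Definition psup_e (r s : Rbar) : Rbar :=
  match r, s with
  | MInf, _ => MInf | _, MInf => MInf | PInf, _ => PInf | _, PInf => PInf
  | Fin a, Fin b => Fin (a + b) end.

Lemma plus_inf_e r s : Rbar_plus_inf r s = pinf_e r s.
Proof.
  unfold Rbar_plus_inf. eapply glb_unique. apply inf_spec.
  destruct r as [a| |], s as [b| |]; simpl.
  - apply glb_min. exists a, b; simpl; repeat split; lra.
    intros x (a'&b'&H1&H2&->); simpl in *; lra.
  - apply glb_empty. intros x (a'&b'&H1&H2&_); auto.
  - apply glb_all. intros x. exists a, (x - a); simpl; repeat split; auto; lra.
  - apply glb_empty. intros x (a'&b'&H1&H2&_); auto.
  - apply glb_empty. intros x (a'&b'&H1&H2&_); auto.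
  - apply glb_empty. intros x (a'&b'&H1&H2&_); auto.
  - apply glb_all. intros x. exists (x - b), b; simpl; repeat split; auto; lra.
  - apply glb_empty. intros x (a'&b'&H1&H2&_); auto.
  - apply glb_all. intros x. exists 0, x; simpl; repeat split; auto; lra.
Qed.

Lemma plus_sup_e r s : Rbar_plus_sup r s = psup_e r s.
Proof.
  unfold Rbar_plus_sup. eapply lub_unique. apply sup_spec.
  destruct r as [a| |], s as [b| |]; simpl.
  - apply lub_max. exists a, b; simpl; repeat split; lra.
    intros x (a'&b'&H1&H2&->); simpl in *; lra.
  - apply lub_all. intros x. exists a, (x - a); simpl; repeat split; auto; lra.
  - apply lub_empty. intros x (a'&b'&H1&H2&_); auto.
  - apply lub_all. intros x. exists (x - b), b; simpl; repeat split; auto; lra.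
  - apply lub_all. intros x. exists 0, x; simpl; repeat split; auto; lra.
  - apply lub_empty. intros x (a'&b'&H1&H2&_); auto.
  - apply lub_empty. intros x (a'&b'&H1&H2&_); auto.
  - apply lub_empty. intros x (a'&b'&H1&H2&_); auto.
  - apply lub_empty. intros x (a'&b'&H1&H2&_); auto.
Qed.

Lemma minus_inf_spec r s :
  Rbar_le r (Rbar_plus_inf s (Rbar_minus_inf r s)) /\
  forall t', Rbar_le r (Rbar_plus_inf s t') -> Rbar_le (Rbar_minus_inf r s) t'.
Proof.
  unfold Rbar_minus_inf. apply epsilon_spec.
  setoid_rewrite plus_inf_e.
  destruct s as [d| |].
  - destruct r as [e| |].
    + exists (Fin (e - d)); simpl; split. lra. intros [c| |]; simpl; auto; lra.
    + exists PInf; simpl; split; auto. intros [c| |]; simpl; auto.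
    + exists MInf; simpl; split; auto.
  - exists MInf; simpl; split; auto. destruct r; simpl; auto.
  - destruct r as [e| |].
    + exists PInf; simpl; split; auto. intros [c| |]; simpl; auto.
    + exists PInf; simpl; split; auto. intros [c| |]; simpl; auto.
    + exists MInf; simpl; split; auto.
Qed.

Lemma minus_sup_spec r s :
  Rbar_le (Rbar_plus_sup s (Rbar_minus_sup r s)) r /\
  forall t', Rbar_le (Rbar_plus_sup s t') r -> Rbar_le t' (Rbar_minus_sup r s).
Proof.
  unfold Rbar_minus_sup. apply epsilon_spec.
  setoid_rewrite plus_sup_e.
  destruct s as [d| |].
  - destruct r as [e| |].
    + exists (Fin (e - d)); simpl; split. lra. intros [c| |]; simpl; auto; lra.
    + exists PInf; simpl; split; auto. intros [c| |]; simpl; auto.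
    + exists MInf; simpl; split; auto. intros [c| |]; simpl; auto.
  - destruct r as [e| |].
    + exists MInf; simpl; split; auto. intros [c| |]; simpl; auto.
    + exists PInf; simpl; split; auto. intros [c| |]; simpl; auto.
    + exists MInf; simpl; split; auto. intros [c| |]; simpl; auto.
  - exists PInf; simpl; split; [destruct r; simpl; auto|]. intros t' _. destruct t'; simpl; auto.
Qed.

Notation "x ⊕ y" := (zadd _ x y) (at level 50, left associativity).
Notation "a ⊙ x" := (zscal _ a x) (at level 40, left associativity).
Notation "⊖ x" := (zopp _ x) (at level 35, right associativity).
Notation "'O'" := (zzero _).

Lemma vadd0l {Z : LCS} (x : Z) : O ⊕ x = x.
Proof. rewrite zadd_comm. apply zadd_0. Qed.
Lemma vadd0r {Z : LCS} (x : Z) : x ⊕ O = x.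
Proof. apply zadd_0. Qed.
Lemma vaddA {Z : LCS} (x y w : Z) : x ⊕ (y ⊕ w) = x ⊕ y ⊕ w.
Proof. apply zadd_assoc. Qed.
Lemma vaddC {Z : LCS} (x y : Z) : x ⊕ y = y ⊕ x.
Proof. apply zadd_comm. Qed.
Lemma voppr {Z : LCS} (x : Z) : x ⊕ ⊖ x = O.
Proof. apply zadd_opp. Qed.
Lemma voppl {Z : LCS} (x : Z) : ⊖ x ⊕ x = O.
Proof. rewrite vaddC. apply zadd_opp. Qed.
Lemma vaddK {Z : LCS} (x y : Z) : x ⊕ y ⊕ ⊖ y = x.
Proof. rewrite <- vaddA, voppr, vadd0r. auto. Qed.
Lemma vaddNK {Z : LCS} (x y : Z) : x ⊕ ⊖ y ⊕ y = x.
Proof. rewrite <- vaddA, voppl, vadd0r. auto. Qed.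
Lemma vcancel_r {Z : LCS} (x y w : Z) : x ⊕ w = y ⊕ w -> x = y.
Proof. intros H. rewrite <- (vaddK x w), <- (vaddK y w), H. auto. Qed.
Lemma vcancel_l {Z : LCS} (x y w : Z) : w ⊕ x = w ⊕ y -> x = y.
Proof. rewrite (vaddC w x), (vaddC w y). apply vcancel_r. Qed.
Lemma vswap4 {Z : LCS} (a b c d : Z) : (a ⊕ b) ⊕ (c ⊕ d) = (a ⊕ c) ⊕ (b ⊕ d).
Proof. rewrite !vaddA. f_equal. rewrite <- !vaddA. f_equal. apply vaddC. Qed.
Lemma vscal0 {Z : LCS} (x : Z) : 0 ⊙ x = O.
Proof. apply (vcancel_l _ _ (0 ⊙ x)). rewrite <- zscal_distr_r, vadd0r. f_equal; ring. Qed.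
Lemma vscal_z0 {Z : LCS} (a : R) : a ⊙ (O : Z) = O.
Proof. rewrite <- (vscal0 (O:Z)), zscal_assoc. f_equal; ring. Qed.
Lemma vscal1 {Z : LCS} (x : Z) : 1 ⊙ x = x.
Proof. apply zscal_1. Qed.
Lemma vscalA {Z : LCS} a b (x : Z) : a ⊙ (b ⊙ x) = (a * b) ⊙ x.
Proof. apply zscal_assoc. Qed.
Lemma vscalDl {Z : LCS} a b (x : Z) : (a + b) ⊙ x = a ⊙ x ⊕ b ⊙ x.
Proof. apply zscal_distr_r. Qed.
Lemma vscalDr {Z : LCS} a (x y : Z) : a ⊙ (x ⊕ y) = a ⊙ x ⊕ a ⊙ y.
Proof. apply zscal_distr_l. Qed.
Lemma vopp_scal {Z : LCS} (x : Z) : ⊖ x = (-1) ⊙ x.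
Proof. apply (vcancel_l _ _ x). rewrite voppr. rewrite <- (vscal1 x) at 1.
  rewrite <- vscalDl. replace (1 + -1) with 0 by ring. rewrite vscal0. auto. Qed.
Lemma vscal_eq {Z : LCS} a b (x : Z) : a = b -> a ⊙ x = b ⊙ x.
Proof. intros ->; auto. Qed.

Lemma lin_add {Z : LCS} (F : Z -> R) x y : is_linear F -> F (x ⊕ y) = F x + F y.
Proof. intros [H _]; auto. Qed.
Lemma lin_scal {Z : LCS} (F : Z -> R) a x : is_linear F -> F (a ⊙ x) = a * F x.
Proof. intros [_ H]; auto. Qed.
Lemma lin_0 {Z : LCS} (F : Z -> R) : is_linear F -> F O = 0.
Proof. intros H. rewrite <- (vscal0 (O:Z)), lin_scal; auto. ring. Qed.
Lemma lin_opp {Z : LCS} (F : Z -> R) x : is_linear F -> F (⊖ x) = - F x.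
Proof. intros H. rewrite vopp_scal, lin_scal; auto. ring. Qed.

Lemma conv_hull_convex {Z : LCS} (A : Z -> Prop) : convex_set (conv_hull A).
Proof. intros a b t Ha Hb Ht D HD HAD. apply HD; [apply Ha|apply Hb|]; auto. Qed.
Lemma conv_hull_incl {Z : LCS} (A : Z -> Prop) a : A a -> conv_hull A a.
Proof. intros Ha D _ HAD; auto. Qed.
Lemma closure_incl {Z : LCS} (A : Z -> Prop) a : A a -> closure A a.
Proof. intros Ha U _ HU; eauto. Qed.

Section HB.
Variable Z : LCS.
Variable q : Z -> R.
Hypothesis hq_add : forall x y, q (x ⊕ y) <= q x + q y.
Hypothesis hq_pos : forall t x, 0 < t -> q (t ⊙ x) = t * q x.
Hypothesis hq_nn : forall x, 0 <= q x.
Variable x0 : Z.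
Hypothesis hx0 : 1 <= q x0.

Definition rel := Z -> R -> Prop.
Definition incl (R1 R2 : rel) := forall x a, R1 x a -> R2 x a.

Definition base : rel := fun x a => x = a ⊙ x0.

Record good (Rl : rel) : Prop := {
  g_fun : forall x a b, Rl x a -> Rl x b -> a = b;
  g_add : forall x y a b, Rl x a -> Rl y b -> Rl (x ⊕ y) (a + b);
  g_scal : forall t x a, Rl x a -> Rl (t ⊙ x) (t * a);
  g_dom : forall x a, Rl x a -> a <= q x;
  g_base : incl base Rl }.

Lemma q0 : q O = 0.
Proof. assert (H := hq_pos 2 O). rewrite vscal_z0 in H. lra. Qed.

Lemma x0_nz : x0 <> O.
Proof. intros H. rewrite H, q0 in hx0. lra. Qed.

Lemma base_good : good base.
Proof.
  constructor; unfold base.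
  - intros x a b -> H. destruct (Req_dec a b) as [|Hab]; auto. exfalso.
    apply x0_nz. assert (E: (a - b) ⊙ x0 = O).
    { apply (vcancel_r _ _ (b ⊙ x0)). rewrite <- vscalDl, vadd0l, <- H. f_equal; ring. }
    rewrite <- (vscal1 x0), <- (vscal_z0 (/(a - b))), <- E, vscalA. f_equal. field. lra.
  - intros x y a b -> ->. rewrite vscalDl. auto.
  - intros t x a ->. rewrite vscalA; auto.
  - intros x a ->. destruct (Rlt_dec 0 a).
    + rewrite hq_pos; auto. nra.
    + pose proof (hq_nn (a ⊙ x0)). lra.
  - intros x a H; exact H.
Qed.

Definition dom (Rl : rel) x := exists a, Rl x a.

Lemma ext_value (Rl : rel) y : good Rl ->
  exists c, forall x a, Rl x a -> (c <= q (x ⊕ y) - a) /\ (a - q (x ⊕ (-1) ⊙ y) <= c).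
Proof.
  intros G.
  set (L := fun v => exists x a, Rl x a /\ v = a - q (x ⊕ (-1) ⊙ y)).
  assert (key : forall x a x' a', Rl x a -> Rl x' a' -> a - q (x ⊕ (-1) ⊙ y) <= q (x' ⊕ y) - a').
  { intros x a x' a' H H'. pose proof (g_dom _ G _ _ (g_add _ G _ _ _ _ H H')).
    pose proof (hq_add (x ⊕ (-1) ⊙ y) (x' ⊕ y)).
    replace (x ⊕ (-1) ⊙ y ⊕ (x' ⊕ y)) with (x ⊕ x') in H1. lra.
    rewrite vswap4, <- vopp_scal, voppl, vadd0r. auto. }
  destruct (completeness L) as [c [Hc1 Hc2]].
  { exists (q (O ⊕ y) - 0). intros v (x&a&H&->). apply key; auto.
    apply (g_base _ G). unfold base. rewrite vscal0; auto. }
  { exists (0 - q (O ⊕ (-1) ⊙ y)), O, 0. split; auto.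
    apply (g_base _ G). unfold base. rewrite vscal0; auto. }
  exists c. intros x a H. split.
  - apply Hc2. intros v (x1&a1&H1&->). apply key; auto.
  - apply Hc1. exists x, a; auto.
Qed.

Lemma ext_prop (Rl : rel) y c : good Rl ->
  (forall x a, Rl x a -> (c <= q (x ⊕ y) - a) /\ (a - q (x ⊕ (-1) ⊙ y) <= c)) ->
  forall x a t, Rl x a -> a + t * c <= q (x ⊕ t ⊙ y).
Proof.
  intros G Hc x a t H.
  destruct (Rtotal_order t 0) as [Ht|[Ht|Ht]].
  - set (s := - t).
    assert (Hs : 0 < s) by (unfold s; lra).
    assert (H1 := g_scal _ G (/ s) _ _ H).
    destruct (Hc _ _ H1) as [_ Hc2].
    assert (E : s ⊙ (/ s ⊙ x ⊕ (-1) ⊙ y) = x ⊕ t ⊙ y).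
    { rewrite vscalDr, !vscalA. f_equal. rewrite <- (vscal1 x) at 2. f_equal. field. lra.
      f_equal. unfold s; ring. }
    rewrite <- E, hq_pos; auto.
    assert (s * (/ s * a) = a) by (field; lra).
    assert (s * (/ s * a - q (/ s ⊙ x ⊕ (-1) ⊙ y)) <= s * c) by (apply Rmult_le_compat_l; lra).
    unfold s in *. nra.
  - subst t. rewrite vscal0, vadd0r. pose proof (g_dom _ G _ _ H). lra.
  - assert (H1 := g_scal _ G (/ t) _ _ H).
    destruct (Hc _ _ H1) as [Hc1 _].
    assert (E : t ⊙ (/ t ⊙ x ⊕ y) = x ⊕ t ⊙ y).
    { rewrite vscalDr, !vscalA. f_equal. rewrite <- (vscal1 x) at 2. f_equal. field. lra. }
    rewrite <- E, hq_pos; auto.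
    assert (t * (/ t * a) = a) by (field; lra).
    assert (t * c <= t * (q (/ t ⊙ x ⊕ y) - / t * a)) by (apply Rmult_le_compat_l; lra).
    nra.
Qed.

Definition ext (Rl : rel) y c : rel :=
  fun x b => exists x1 a1 t, Rl x1 a1 /\ x = x1 ⊕ t ⊙ y /\ b = a1 + t * c.

Lemma ext_incl Rl y c : incl Rl (ext Rl y c).
Proof. intros x a H. exists x, a, 0. rewrite vscal0, vadd0r. split; auto. split; auto. ring. Qed.

Lemma lin_diff (x x' y : Z) a b : x ⊕ a ⊙ y = x' ⊕ b ⊙ y -> (a - b) ⊙ y = x' ⊕ (-1) ⊙ x.
Proof.
  intros H. apply (vcancel_r _ _ (x ⊕ b ⊙ y)).
  rewrite vaddA, (vaddC _ x), <- vaddA, <- vscalDl. replace (a - b + b) with a by ring.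
  rewrite H, <- vopp_scal. rewrite vaddA, vaddNK. auto.
Qed.

Lemma ext_good Rl y c : good Rl -> ~ dom Rl y ->
  (forall x a, Rl x a -> (c <= q (x ⊕ y) - a) /\ (a - q (x ⊕ (-1) ⊙ y) <= c)) ->
  good (ext Rl y c).
Proof.
  intros G Hy Hc. constructor.
  - intros x a b (x1&a1&t&H1&E1&->) (x2&a2&s&H2&E2&->).
    rewrite E1 in E2.
    destruct (Req_dec t s) as [<-|Hts].
    + apply vcancel_r in E2. subst. rewrite (g_fun _ G _ _ _ H1 H2). auto.
    + exfalso. apply Hy. apply lin_diff in E2.
      exists (/ (t - s) * (a2 + (-1) * a1)).
      replace y with (/ (t - s) ⊙ (x2 ⊕ (-1) ⊙ x1)).
      apply (g_scal _ G). apply (g_add _ G); auto. apply (g_scal _ G); auto.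
      rewrite <- E2, vscalA. rewrite <- (vscal1 y) at 2. f_equal. field. lra.
  - intros x x' a b (x1&a1&t&H1&->&->) (x2&a2&s&H2&->&->).
    exists (x1 ⊕ x2), (a1 + a2), (t + s). split; [apply (g_add _ G); auto|].
    split. rewrite vswap4, vscalDl; auto. ring.
  - intros r x a (x1&a1&t&H1&->&->). exists (r ⊙ x1), (r * a1), (r * t).
    split; [apply (g_scal _ G); auto|]. split. rewrite vscalDr, vscalA; auto. ring.
  - intros x a (x1&a1&t&H1&->&->). apply (ext_prop Rl y c); auto.
  - intros x a H. apply ext_incl. apply (g_base _ G); auto.
Qed.

Definition next (Rl : rel) : rel :=
  match excluded_middle_informative (exists y, ~ dom Rl y) with
  | left H =>
      let y := proj1_sig (constructive_indefinite_description _ H) in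
      match excluded_middle_informative (exists c, forall x a, Rl x a -> (c <= q (x ⊕ y) - a) /\ (a - q (x ⊕ (-1) ⊙ y) <= c)) with
      | left Hc => ext Rl y (proj1_sig (constructive_indefinite_description _ Hc))
      | right _ => Rl
      end
  | right _ => Rl
  end.

Lemma next_incl Rl : incl Rl (next Rl).
Proof.
  unfold next. destruct excluded_middle_informative; [|intros ? ? ?; auto].
  destruct excluded_middle_informative; [apply ext_incl|intros ? ? ?; auto].
Qed.

Lemma next_good Rl : good Rl -> good (next Rl).
Proof.
  intros G. unfold next. destruct excluded_middle_informative as [H|]; auto.
  destruct excluded_middle_informative as [Hc|]; auto.
  apply ext_good; auto.
  apply (proj2_sig (constructive_indefinite_description _ H)).
  apply (proj2_sig (constructive_indefinite_description _ Hc)).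
Qed.

Lemma next_full Rl : good Rl -> incl (next Rl) Rl -> forall y, dom Rl y.
Proof.
  intros G Hn y. apply NNPP. intros Hy.
  unfold next in Hn. destruct excluded_middle_informative as [H|H]; [|apply H; eauto].
  destruct excluded_middle_informative as [Hc|Hc];
    [|apply Hc; apply (ext_value _ (proj1_sig (constructive_indefinite_description _ H))); auto].
  apply (proj2_sig (constructive_indefinite_description _ H)).
  exists (0 + 1 * proj1_sig (constructive_indefinite_description _ Hc)). apply Hn. exists O, 0, 1. split.
  apply (g_base _ G). unfold base. rewrite vscal0; auto.
  rewrite vscal1, vadd0l; auto.
Qed.

Definition chain (S : rel -> Prop) := forall R1 R2, S R1 -> S R2 -> incl R1 R2 \/ incl R2 R1.
Definition rsup (S : rel -> Prop) : rel := fun x a => base x a \/ exists Rl, S Rl /\ Rl x a.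

Lemma rsup_good S : (forall Rl, S Rl -> good Rl) -> chain S -> good (rsup S).
Proof.
  intros HG HC.
  assert (common : forall x a y b, rsup S x a -> rsup S y b ->
            exists Rl, good Rl /\ incl Rl (rsup S) /\ Rl x a /\ Rl y b).
  { intros x a y b [H1|(R1&S1&H1)] [H2|(R2&S2&H2)].
    - exists base. split. apply base_good. split. intros ? ? ?; left; auto. auto.
    - exists R2. split; auto. split. intros ? ? ?; right; eauto. split; auto. apply (g_base _ (HG _ S2)); auto.
    - exists R1. split; auto. split. intros ? ? ?; right; eauto. split; auto. apply (g_base _ (HG _ S1)); auto.
    - destruct (HC _ _ S1 S2) as [I|I].
      + exists R2. split; auto. split. intros ? ? ?; right; eauto. auto.
      + exists R1. split; auto. split. intros ? ? ?; right; eauto. auto. }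
  constructor.
  - intros x a b H1 H2. destruct (common _ _ _ _ H1 H2) as (Rl&G&_&K1&K2). eapply g_fun; eauto.
  - intros x y a b H1 H2. destruct (common _ _ _ _ H1 H2) as (Rl&G&I&K1&K2). apply I. eapply g_add; eauto.
  - intros t x a H. destruct (common _ _ _ _ H H) as (Rl&G&I&K1&_). apply I. eapply g_scal; eauto.
  - intros x a H. destruct (common _ _ _ _ H H) as (Rl&G&I&K1&_). eapply g_dom; eauto.
  - intros x a H. left; auto.
Qed.

Lemma rsup_ub S Rl : S Rl -> incl Rl (rsup S).
Proof. intros H x a K. right; eauto. Qed.
Lemma rsup_least S M : good M -> (forall Rl, S Rl -> incl Rl M) -> incl (rsup S) M.
Proof. intros G H x a [K|(Rl&SR&K)]. apply (g_base _ G); auto. eapply H; eauto. Qed.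

Inductive tower : rel -> Prop :=
 | tw_next Rl : tower Rl -> tower (next Rl)
 | tw_sup S : (forall Rl, S Rl -> tower Rl) -> chain S -> tower (rsup S).

Lemma tower_good Rl : tower Rl -> good Rl.
Proof.
  induction 1. apply next_good; auto. apply rsup_good; auto.
Qed.

Lemma incl_antisym R1 R2 : incl R1 R2 -> incl R2 R1 -> R1 = R2.
Proof.
  intros H1 H2. apply functional_extensionality; intro x. apply functional_extensionality; intro a.
  apply propositional_extensionality; split; auto.
Qed.

Lemma incl_trans R1 R2 R3 : incl R1 R2 -> incl R2 R3 -> incl R1 R3.
Proof. unfold incl; auto. Qed.
Lemma incl_refl R1 : incl R1 R1.
Proof. unfold incl; auto. Qed.

Definition extreme c := forall x, tower x -> incl x c -> ~ incl c x -> incl (next x) c.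

Lemma extreme_split c : tower c -> extreme c -> forall x, tower x -> incl x c \/ incl (next c) x.
Proof.
  intros Tc Ec x Tx. induction Tx as [x Tx IH|S HS IH HC].
  - destruct IH as [I|I].
    + destruct (classic (incl c x)) as [J|J].
      * right. rewrite (incl_antisym _ _ I J). apply incl_refl.
      * left. apply Ec; auto.
    + right. eapply incl_trans; [exact I|apply next_incl].
  - destruct (classic (exists Rl, S Rl /\ incl (next c) Rl)) as [(Rl&SR&I)|N].
    + right. eapply incl_trans; [exact I|apply rsup_ub; auto].
    + left. apply rsup_least. apply tower_good; auto.
      intros Rl SR. destruct (IH _ SR) as [I|I]; auto. exfalso; apply N; eauto.
Qed.

Lemma all_extreme c : tower c -> extreme c.
Proof.
  induction 1 as [c Tc IH|S HS IH HC].
  - intros x Tx I1 I2. destruct (extreme_split c Tc IH x Tx) as [J|J].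
    + destruct (classic (incl c x)) as [K|K].
      * rewrite (incl_antisym _ _ J K). apply incl_refl.
      * eapply incl_trans; [apply IH; auto|apply next_incl].
    + exfalso. apply I2. auto.
  - intros x Tx I1 I2.
    destruct (classic (exists Rl, S Rl /\ incl x Rl /\ ~ incl Rl x)) as [(Rl&SR&J&K)|N].
    + eapply incl_trans; [apply (IH _ SR); auto|apply rsup_ub; auto].
    + exfalso. apply I2. apply rsup_least. apply tower_good; auto.
      intros Rl SR. destruct (extreme_split Rl (HS _ SR) (IH _ SR) x Tx) as [J|J].
      * apply NNPP. intros K. apply N. eauto.
      * eapply incl_trans; [apply next_incl|exact J].
Qed.

Lemma tower_chain : chain tower.
Proof.
  intros x c Tx Tc. destruct (extreme_split c Tc (all_extreme c Tc) x Tx) as [J|J]; auto.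
  right. eapply incl_trans; [apply next_incl|exact J].
Qed.

Theorem HB_ext : exists Rl, good Rl /\ forall y, dom Rl y.
Proof.
  set (M := rsup tower).
  assert (TM : tower M) by (apply tw_sup; auto; apply tower_chain).
  exists M. split. apply tower_good; auto.
  apply next_full. apply tower_good; auto.
  apply rsup_ub. apply tw_next; auto.
Qed.

Theorem HB : exists F : Z -> R, is_linear F /\ F x0 = 1 /\ forall x, F x <= q x.
Proof.
  destruct HB_ext as (Rl&G&D).
  set (F := fun x => proj1_sig (constructive_indefinite_description _ (D x))).
  assert (HF : forall x, Rl x (F x)).
  { intros x. unfold F. destruct constructive_indefinite_description; auto. }
  assert (HFu : forall x a, Rl x a -> F x = a). { intros; eapply g_fun; eauto. }
  exists F. split; [split|split].
  - intros x y. apply HFu. apply (g_add _ G); auto.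
  - intros a x. apply HFu. apply (g_scal _ G); auto.
  - apply HFu. apply (g_base _ G). unfold base. rewrite vscal1; auto.
  - intros x. apply (g_dom _ G); auto.
Qed.

End HB.

Section Mink.
Variable Z : LCS.
Variable K : Z -> Prop.
Hypothesis Kconv : convex_set K.
Hypothesis K0 : K O.
Hypothesis Kabs : forall x, exists d, 0 < d /\ K (d ⊙ x).

Definition T x t := 0 < t /\ K (/ t ⊙ x).

Lemma T_glb x : exists m, (forall t, T x t -> m <= t) /\ (forall m', (forall t, T x t -> m' <= t) -> m' <= m).
Proof.
  destruct (Kabs x) as (d&Hd&Kd).
  destruct (completeness (fun u => T x (- u))) as [l [H1 H2]].
  { exists 0. intros u [Hu _]. lra. }
  { exists (- / d). split. rewrite Ropp_involutive. apply Rinv_0_lt_compat; auto.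
    rewrite Ropp_involutive, Rinv_inv. auto. }
  exists (- l). split.
  - intros t Ht. assert (- t <= l) by (apply H1; rewrite Ropp_involutive; auto). lra.
  - intros m' Hm. assert (l <= - m'). { apply H2. intros u Hu. specialize (Hm _ Hu). lra. } lra.
Qed.

Definition mq x : R := proj1_sig (constructive_indefinite_description _ (T_glb x)).

Lemma mq_spec x : (forall t, T x t -> mq x <= t) /\ (forall m', (forall t, T x t -> m' <= t) -> m' <= mq x).
Proof. unfold mq. destruct constructive_indefinite_description; auto. Qed.
Lemma mq_lb x t : T x t -> mq x <= t.
Proof. apply mq_spec. Qed.
Lemma mq_gr x m : (forall t, T x t -> m <= t) -> m <= mq x.
Proof. apply mq_spec. Qed.
Lemma mq_nn x : 0 <= mq x.
Proof. apply mq_gr. intros t [Ht _]; lra. Qed.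

Lemma T_up x t t' : T x t -> t <= t' -> T x t'.
Proof.
  intros [Ht Kt] Hle. split. lra.
  assert (E : / t' ⊙ x = (t / t') ⊙ (/ t ⊙ x) ⊕ (1 - t / t') ⊙ O).
  { rewrite vscal_z0, vadd0r, vscalA. f_equal. field. split; lra. }
  rewrite E. apply Kconv; auto. split.
  apply Rmult_le_pos; [lra|]. left; apply Rinv_0_lt_compat; lra.
  apply (Rmult_le_reg_r t'). lra. unfold Rdiv. rewrite Rmult_assoc, Rinv_l; lra.
Qed.

Lemma T_above x t : mq x < t -> T x t.
Proof.
  intros H. apply NNPP. intros N.
  assert (t <= mq x). { apply mq_gr. intros t' Ht'. apply Rnot_lt_le. intros Hlt.
    apply N. eapply T_up; eauto; lra. } lra.
Qed.

Lemma mq_pos s x : 0 < s -> mq (s ⊙ x) = s * mq x.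
Proof.
  intros Hs. apply Rle_antisym.
  - assert (mq (s ⊙ x) / s <= mq x).
    { apply mq_gr. intros t [Ht Kt]. apply (Rmult_le_reg_r s); [lra|].
      unfold Rdiv; rewrite Rmult_assoc, Rinv_l, Rmult_1_r; [|lra].
      apply mq_lb. split. nra. rewrite vscalA. replace (/ (t * s) * s) with (/ t); auto. field; lra. }
    unfold Rdiv in H. apply (Rmult_le_compat_l s) in H; [|lra].
    rewrite <- Rmult_assoc, (Rmult_comm s), Rmult_assoc, Rinv_r, Rmult_1_r in H; lra.
  - apply mq_gr. intros t [Ht Kt].
    cut (mq x <= t / s). { intros Hc. apply (Rmult_le_compat_l s) in Hc; [|lra].
      unfold Rdiv in Hc. rewrite (Rmult_comm t), <- Rmult_assoc, Rinv_r, Rmult_1_l in Hc; lra. }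
    apply mq_lb. split. apply Rdiv_lt_0_compat; lra.
    replace (/ (t / s) ⊙ x) with (/ t ⊙ (s ⊙ x)); auto. rewrite vscalA. f_equal. field; lra.
Qed.

Lemma mq_add x y : mq (x ⊕ y) <= mq x + mq y.
Proof.
  apply Rnot_lt_le. intros Hlt.
  set (e := (mq (x ⊕ y) - (mq x + mq y)) / 3).
  assert (He : 0 < e) by (unfold e; lra).
  set (t := mq x + e). set (u := mq y + e).
  assert (Tt : T x t) by (apply T_above; unfold t; lra).
  assert (Tu : T y u) by (apply T_above; unfold u; lra).
  destruct Tt as [Ht Kt]. destruct Tu as [Hu Ku].
  assert (T (x ⊕ y) (t + u)).
  { split. lra.
    assert (E : / (t + u) ⊙ (x ⊕ y) = (t / (t + u)) ⊙ (/ t ⊙ x) ⊕ (1 - t / (t + u)) ⊙ (/ u ⊙ y)).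
    { rewrite vscalDr, !vscalA. f_equal; f_equal; field; lra. }
    rewrite E. apply Kconv; auto. split.
    apply Rmult_le_pos; [lra|]. left; apply Rinv_0_lt_compat; lra.
    apply (Rmult_le_reg_r (t + u)). lra. unfold Rdiv. rewrite Rmult_assoc, Rinv_l; lra. }
  apply mq_lb in H. unfold t, u, e in H. lra.
Qed.

Lemma mq_K x : K x -> mq x <= 1.
Proof. intros Hx. apply mq_lb. split. lra. rewrite Rinv_1, vscal1; auto. Qed.
Lemma mq_lt1 x : mq x < 1 -> K x.
Proof. intros H. destruct (T_above _ _ H) as [_ Hk]. rewrite Rinv_1, vscal1 in Hk; auto. Qed.

End Mink.

Lemma separation {Z : LCS} (G : Z -> Prop) g0 p U :
  convex_set G -> G g0 -> zopen Z U -> U p -> (forall z, U z -> G z -> False) ->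
  exists F, in_dual F /\ exists d, 0 < d /\ forall g, G g -> F p + d <= F g.
Proof.
  intros Gc Gg0 HU Up HUG.
  destruct (zadd_cont Z p O U HU) as (V1&W&HV1&HW&V1p&WO&HVW). rewrite vadd0r; auto.
  destruct (zloc_convex Z W HW WO) as (V0&HV0&V0O&V0c&V0W).
  assert (V0abs : forall x, exists d, 0 < d /\ V0 (d ⊙ x)).
  { intros x. destruct (zscal_cont Z 0 x V0 HV0) as (eps&Heps&V&HV&Vx&HVs). rewrite vscal0; auto.
    exists (eps / 2). split. lra. apply HVs; auto. rewrite Rminus_0_r, Rabs_right; lra. }
  set (K := fun k => exists v g, V0 v /\ G g /\ k ⊕ g = v ⊕ g0).
  assert (Kc : convex_set K).
  { intros k1 k2 t (v1&h1&Hv1&Hh1&E1) (v2&h2&Hv2&Hh2&E2) Ht.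
    exists (t ⊙ v1 ⊕ (1 - t) ⊙ v2), (t ⊙ h1 ⊕ (1 - t) ⊙ h2). split; [apply V0c; auto|].
    split; [apply Gc; auto|].
    rewrite vswap4, <- !vscalDr, E1, E2, !vscalDr, vswap4, <- vscalDl.
    replace (t + (1 - t)) with 1 by ring. rewrite vscal1; auto. }
  assert (K0 : K O). { exists O, g0. split; auto. }
  assert (VK : forall v, V0 v -> K v). { intros v Hv. exists v, g0; auto. }
  assert (Kabs : forall x, exists d, 0 < d /\ K (d ⊙ x)).
  { intros x. destruct (V0abs x) as (d&Hd&Hx); eauto. }
  set (x0 := g0 ⊕ ⊖ p).
  assert (nK : ~ K x0).
  { intros (v&g&Hv&Hg&E). apply (HUG g); auto.
    assert (g = p ⊕ v). { unfold x0 in E. apply (vcancel_l _ _ g0).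
      assert (H0 : g0 ⊕ g = g0 ⊕ ⊖ p ⊕ g ⊕ p) by (rewrite <- (vaddA (g0 ⊕ ⊖ p)), (vaddC g p), vaddA, vaddNK; auto).
      rewrite H0, E, (vaddC v g0), <- vaddA, (vaddC v p); auto. }
    subst g. apply HVW; auto. }
  set (q := mq Z K Kabs).
  assert (hx0 : 1 <= q x0).
  { apply Rnot_lt_le. intros H. apply nK. eapply mq_lt1; eauto. }
  destruct (HB Z q (mq_add Z K Kc K0 Kabs) (mq_pos Z K Kabs) (mq_nn Z K Kabs) x0 hx0)
    as (F&FL&Fx0&Fq).
  assert (FK : forall k, K k -> F k <= 1).
  { intros k Hk. eapply Rle_trans; [apply Fq|]. apply mq_K; auto. }
  exists F. split; [split; auto|].
  - intros x eps Heps.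
    set (c := 2 / eps).
    assert (Hc : 0 < c) by (unfold c; apply Rdiv_lt_0_compat; lra).
    destruct (zscal_cont Z c O V0 HV0) as (e1&He1&V2&HV2&V2O&H2). rewrite vscal_z0; auto.
    destruct (zscal_cont Z (- c) O V0 HV0) as (e2&He2&V3&HV3&V3O&H3). rewrite vscal_z0; auto.
    destruct (zadd_cont Z x (⊖ x) (fun z => V2 z /\ V3 z) (zopen_inter Z _ _ HV2 HV3))
      as (V4&W4&HV4&HW4&V4x&W4x&H4). rewrite voppr; auto.
    exists V4. split; auto. split; auto. intros y Hy.
    destruct (H4 y (⊖ x) Hy W4x) as [D2 D3].
    assert (A1 := FK _ (VK _ (H2 c _ ltac:(rewrite Rminus_diag, Rabs_R0; lra) D2))).
    assert (A2 := FK _ (VK _ (H3 (- c) _ ltac:(rewrite Rminus_diag, Rabs_R0; lra) D3))).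
    rewrite lin_scal, lin_add, lin_opp in A1, A2; auto.
    assert (Hb : Rabs (F y - F x) <= / c).
    { apply Rabs_le. split.
      - apply (Rmult_le_reg_l c); auto. rewrite Rmult_comm, <- Ropp_mult_distr_l, Rinv_l; lra.
      - apply (Rmult_le_reg_l c); auto. rewrite Rinv_r; lra. }
    unfold c in Hb. rewrite Rinv_div in Hb. lra.
  - destruct (V0abs x0) as (d&Hd&Vd). exists d. split; auto. intros g Hg.
    assert (Kk : K (d ⊙ x0 ⊕ g0 ⊕ ⊖ g)). { exists (d ⊙ x0), g. split; auto. split; auto. apply vaddNK. }
    apply FK in Kk. unfold x0 in Fx0, Kk.
    rewrite !lin_add, lin_scal, lin_opp, Fx0 in Kk; auto.
    rewrite lin_add, lin_opp in Fx0; auto. lra.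
Qed.

Lemma pinf_le s t d c : Rbar_le s (Fin d) -> Rbar_le t (Fin c) -> Rbar_le (pinf_e s t) (Fin (d + c)).
Proof. destruct s, t; simpl; auto; try tauto; lra. Qed.
Lemma psup_ge s t d c : Rbar_le (Fin d) s -> Rbar_le (Fin c) t -> Rbar_le (Fin (d + c)) (psup_e s t).
Proof. destruct s, t; simpl; auto; try tauto; lra. Qed.

Lemma inf_empty_P (P : R -> Prop) : (forall x, ~ P x) -> Rbar_inf P = PInf.
Proof. intros H. eapply glb_unique. apply inf_spec. apply glb_empty; auto. Qed.
Lemma sup_empty_P (P : R -> Prop) : (forall x, ~ P x) -> Rbar_sup P = MInf.
Proof. intros H. eapply lub_unique. apply sup_spec. apply lub_empty; auto. Qed.

Lemma inf_shift (P : R -> Prop) u c : (forall x, P x -> Rbar_le u (Fin (x + c))) ->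
  Rbar_le u (pinf_e (Rbar_inf P) (Fin c)).
Proof.
  intros H. destruct u as [e| |].
  - assert (Rbar_le (Fin (e - c)) (Rbar_inf P)).
    { apply inf_gr. intros x Hx. specialize (H _ Hx). simpl in *. lra. }
    destruct (Rbar_inf P); simpl in *; auto; lra.
  - rewrite inf_empty_P. simpl; auto. intros x Hx. specialize (H _ Hx). simpl in H. auto.
  - simpl; auto.
Qed.
Lemma sup_shift (P : R -> Prop) u c : (forall x, P x -> Rbar_le (Fin (x + c)) u) ->
  Rbar_le (psup_e (Rbar_sup P) (Fin c)) u.
Proof.
  intros H. destruct u as [e| |].
  - assert (Rbar_le (Rbar_sup P) (Fin (e - c))).
    { apply sup_le. intros x Hx. specialize (H _ Hx). simpl in *. lra. }
    destruct (Rbar_sup P); simpl in *; auto; lra.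
  - simpl. destruct (Rbar_sup P); simpl; auto.
  - rewrite sup_empty_P. simpl; auto. intros x Hx. specialize (H _ Hx). simpl in H. auto.
Qed.

Lemma chain_inf {Z : LCS} (A B : Z -> Prop) zs z b : is_linear zs -> B b ->
  Rbar_le (Rbar_minus_inf (sigma_inf A zs) (sigma_inf B zs)) (Fin (- zs z)) ->
  Rbar_le (sigma_inf A zs) (Fin (- zs (b ⊕ z))).
Proof.
  intros L Hb Hm. destruct (minus_inf_spec (sigma_inf A zs) (sigma_inf B zs)) as [M1 _].
  rewrite plus_inf_e in M1. eapply Rbar_le_trans; [exact M1|].
  rewrite lin_add; auto. replace (- (zs b + zs z)) with (- zs b + - zs z) by ring.
  apply pinf_le; auto. apply inf_lb. eauto.
Qed.

Lemma forward_inf {Z : LCS} (A B : Z -> Prop) zs z : is_linear zs -> set_diff A B z ->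
  Rbar_le (Rbar_minus_inf (sigma_inf A zs) (sigma_inf B zs)) (Fin (- zs z)).
Proof.
  intros L Hd. destruct (minus_inf_spec (sigma_inf A zs) (sigma_inf B zs)) as [_ M2].
  apply M2. rewrite plus_inf_e. apply inf_shift. intros x (b&Hb&->).
  apply inf_lb. exists (b ⊕ z). split. apply Hd; auto. rewrite lin_add; auto. ring.
Qed.

Lemma chain_sup {Z : LCS} (A B : Z -> Prop) zs z b : is_linear zs -> B b ->
  Rbar_le (Fin (- zs z)) (Rbar_minus_sup (sigma_sup A zs) (sigma_sup B zs)) ->
  Rbar_le (Fin (- zs (b ⊕ z))) (sigma_sup A zs).
Proof.
  intros L Hb Hm. destruct (minus_sup_spec (sigma_sup A zs) (sigma_sup B zs)) as [M1 _].
  rewrite plus_sup_e in M1. eapply Rbar_le_trans; [|exact M1].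
  rewrite lin_add; auto. replace (- (zs b + zs z)) with (- zs b + - zs z) by ring.
  apply psup_ge; auto. apply sup_ub. eauto.
Qed.

Lemma forward_sup {Z : LCS} (A B : Z -> Prop) zs z : is_linear zs -> set_diff A B z ->
  Rbar_le (Fin (- zs z)) (Rbar_minus_sup (sigma_sup A zs) (sigma_sup B zs)).
Proof.
  intros L Hd. destruct (minus_sup_spec (sigma_sup A zs) (sigma_sup B zs)) as [_ M2].
  apply M2. rewrite plus_sup_e. apply sup_shift. intros x (b&Hb&->).
  apply sup_ub. exists (b ⊕ z). split. apply Hd; auto. rewrite lin_add; auto. ring.
Qed.

Lemma neg_dual {Z : LCS} (F : Z -> R) : in_dual F -> in_dual (fun z => - F z).
Proof.
  intros [[L1 L2] Cn]. split. split.
  - intros x y. rewrite L1. ring.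
  - intros a x. rewrite L2. ring.
  - intros x eps He. destruct (Cn x eps He) as (U&HU&Ux&HUy). exists U. split; auto. split; auto.
    intros y Hy. replace (- F y - - F x) with (- (F y - F x)) by ring. rewrite Rabs_Ropp. auto.
Qed.

Lemma get_open {Z : LCS} (G : Z -> Prop) p : ~ closure G p ->
  exists U, zopen Z U /\ U p /\ forall z, U z -> G z -> False.
Proof.
  intros H. apply NNPP. intros N. apply H. intros U HU Up. apply NNPP. intros N2.
  apply N. exists U. split; auto. split; auto. intros z Uz Gz. apply N2. eauto.
Qed.

Lemma sep_inf {Z : LCS} (C A : Z -> Prop) : C O -> convex_cone C ->
  (exists zs, Cminus C zs /\ zs <> (fun _ => 0)) -> in_Q_inf C A ->
  forall p, ~ A p -> exists zs, Cminus C zs /\ zs <> (fun _ => 0) /\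
    ~ Rbar_le (sigma_inf A zs) (Fin (- zs p)).
Proof.
  intros HC0 [_ HCs] HCm HQ p nA.
  destruct (classic (exists a0, A a0)) as [[a0 Ha0]|NA].
  - assert (nc : ~ closure (conv_hull (set_add A C)) p). { intros H. apply nA, HQ; auto. }
    destruct (get_open _ _ nc) as (U&HU&Up&HUG).
    assert (Gin : forall a c, A a -> C c -> conv_hull (set_add A C) (a ⊕ c)).
    { intros a c Ha Hc. apply conv_hull_incl. exists a, c; auto. }
    destruct (separation _ (a0 ⊕ O) p U (conv_hull_convex _) (Gin _ _ Ha0 HC0) HU Up HUG)
      as (F&FD&d&Hd&HF).
    assert (FL : is_linear F) by apply FD.
    exists (fun z => - F z). split; [split|split].
    + apply neg_dual; auto.
    + intros c Hc. apply Rnot_lt_le. intros Hlt.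
      set (s := (Rabs (F a0 - F p) + 1) / F c).
      assert (Hs : s < 0). { unfold s, Rdiv. assert (/ F c < 0) by (apply Rinv_lt_0_compat; lra). pose proof (Rabs_pos (F a0 - F p)). nra. }
      assert (Hsc : C ((- s) ⊙ c)) by (apply HCs; auto; lra).
      pose proof (HF _ (Gin _ _ Ha0 Hsc)). rewrite lin_add, lin_scal in H; auto.
      assert (E : - s * F c = - (Rabs (F a0 - F p) + 1)) by (unfold s; field; lra).
      pose proof (Rle_abs (F a0 - F p)). lra.
    + intros E. pose proof (equal_f E p). pose proof (equal_f E (a0 ⊕ O)). simpl in *.
      pose proof (HF _ (Gin _ _ Ha0 HC0)). lra.
    + intros H. assert (H2 : Rbar_le (Fin (F p + d)) (sigma_inf A (fun z => - F z))).
      { apply inf_gr. intros x (a&Ha&->). simpl. pose proof (HF _ (Gin _ _ Ha HC0)).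
        rewrite lin_add, lin_0 in H0; auto. lra. }
      pose proof (Rbar_le_trans _ _ _ H2 H). simpl in H0. lra.
  - destruct HCm as (zs&Hzs&Hnz). exists zs. split; auto. split; auto.
    unfold sigma_inf. rewrite inf_empty_P. simpl; auto.
    intros x (a&Ha&_). apply NA; eauto.
Qed.

Lemma sep_sup {Z : LCS} (C A : Z -> Prop) : C O -> convex_cone C ->
  (exists zs, Cminus C zs /\ zs <> (fun _ => 0)) -> in_Q_sup C A ->
  forall p, ~ A p -> exists zs, Cminus C zs /\ zs <> (fun _ => 0) /\
    ~ Rbar_le (Fin (- zs p)) (sigma_sup A zs).
Proof.
  intros HC0 [_ HCs] HCm HQ p nA.
  destruct (classic (exists a0, A a0)) as [[a0 Ha0]|NA].
  - assert (nc : ~ closure (conv_hull (set_sub A C)) p). { intros H. apply nA, HQ; auto. }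
    destruct (get_open _ _ nc) as (U&HU&Up&HUG).
    assert (Gin : forall a c, A a -> C c -> conv_hull (set_sub A C) (a ⊕ ⊖ c)).
    { intros a c Ha Hc. apply conv_hull_incl. exists a, c; auto. }
    destruct (separation _ (a0 ⊕ ⊖ O) p U (conv_hull_convex _) (Gin _ _ Ha0 HC0) HU Up HUG)
      as (F&FD&d&Hd&HF).
    assert (FL : is_linear F) by apply FD.
    exists F. split; [split|split]; auto.
    + intros c Hc. apply Rnot_lt_le. intros Hlt.
      set (s := (Rabs (F a0 - F p) + 1) / F c).
      assert (Hs : 0 < s). { unfold s. apply Rdiv_lt_0_compat; [|lra]. pose proof (Rabs_pos (F a0 - F p)). lra. }
      assert (Hsc : C (s ⊙ c)) by (apply HCs; auto).
      pose proof (HF _ (Gin _ _ Ha0 Hsc)). rewrite lin_add, lin_opp, lin_scal in H; auto.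
      assert (E : s * F c = (Rabs (F a0 - F p) + 1)) by (unfold s; field; lra).
      pose proof (Rle_abs (F a0 - F p)). lra.
    + intros E. pose proof (equal_f E p). pose proof (equal_f E (a0 ⊕ ⊖ O)). simpl in *.
      pose proof (HF _ (Gin _ _ Ha0 HC0)). lra.
    + intros H. assert (H2 : Rbar_le (sigma_sup A F) (Fin (- F p - d))).
      { apply sup_le. intros x (a&Ha&->). simpl. pose proof (HF _ (Gin _ _ Ha HC0)).
        rewrite lin_add, lin_opp, lin_0 in H0; auto. lra. }
      pose proof (Rbar_le_trans _ _ _ H H2). simpl in H0. lra.
  - destruct HCm as (zs&Hzs&Hnz). exists zs. split; auto. split; auto.
    unfold sigma_sup. rewrite sup_empty_P. simpl; auto.
    intros x (a&Ha&_). apply NA; eauto.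
Qed.

Theorem mainTheorem16 (Z : LCS) (C : Z -> Prop)
  (HC0 : C (zzero Z)) (HC : convex_cone C)
  (HCm : exists zs, Cminus C zs /\ zs <> (fun _ => 0)) :
  (* (a) *)
  (forall A B : Z -> Prop, in_Q_inf C A -> in_Q_inf C B ->
     (forall z, set_diff A B z <->
        (forall zs, Cminus C zs -> zs <> (fun _ => 0) ->
           Rbar_le (Rbar_minus_inf (sigma_inf A zs) (sigma_inf B zs)) (Fin (- zs z)))) /\
     (forall zs, Cminus C zs -> zs <> (fun _ => 0) ->
        (forall z, A z <-> Rbar_le (sigma_inf A zs) (Fin (- zs z))) ->
        forall z, set_diff A B z <->
          Rbar_le (Rbar_minus_inf (sigma_inf A zs) (sigma_inf B zs)) (Fin (- zs z)))) /\
  (* (b) *)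
  (forall A B : Z -> Prop, in_Q_sup C A -> in_Q_sup C B ->
     (forall z, set_diff A B z <->
        (forall zs, Cminus C zs -> zs <> (fun _ => 0) ->
           Rbar_le (Fin (- zs z)) (Rbar_minus_sup (sigma_sup A zs) (sigma_sup B zs)))) /\
     (forall zs, Cminus C zs -> zs <> (fun _ => 0) ->
        (forall z, A z <-> Rbar_le (Fin (- zs z)) (sigma_sup A zs)) ->
        forall z, set_diff A B z <->
          Rbar_le (Fin (- zs z)) (Rbar_minus_sup (sigma_sup A zs) (sigma_sup B zs)))).
Proof.
  split.
  - intros A B HA HB. split.
    + intros z. split.
      * intros Hd zs [[L _] _] _. apply forward_inf; auto.
      * intros H b Hb. apply NNPP. intros nA.
        destruct (sep_inf C A HC0 HC HCm HA _ nA) as (zs&Hzs&Hnz&Hn).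
        apply Hn. apply (chain_inf A B); auto; try apply Hzs; try apply H; auto.
    + intros zs Hzs Hnz HAe z. assert (L : is_linear zs) by apply Hzs. split.
      * intros Hd. apply forward_inf; auto.
      * intros H b Hb. apply HAe. apply (chain_inf A B); auto.
  - intros A B HA HB. split.
    + intros z. split.
      * intros Hd zs [[L _] _] _. apply forward_sup; auto.
      * intros H b Hb. apply NNPP. intros nA.
        destruct (sep_sup C A HC0 HC HCm HA _ nA) as (zs&Hzs&Hnz&Hn).
        apply Hn. apply (chain_sup A B); auto; try apply Hzs; try apply H; auto.
    + intros zs Hzs Hnz HAe z. assert (L : is_linear zs) by apply Hzs. split.
      * intros Hd. apply forward_sup; auto.
      * intros H b Hb. apply HAe. apply (chain_sup A B); auto.
Qed.
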